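(* There exist universal constants $c,C>0$ with the following property. Suppose that $m,n\in\mathbb{N}$ satisfy $4\le m\le n$ and $n\ge (m\log m)/4$. Then there exist $s\in\mathbb{N}$ with $s\ge c\,m^2/n$ and an $m$-by-$n$ matrix $B$ with integer entries and of rank $m$, such that any $s$ of the columns of $B$ are linearly independent and $$\|B\|_{\ell_2^n\to\ell_2^m}\le C\sqrt{\frac{n}{m}}.$$
   Context: $\|B\|_{\ell_2^n\to\ell_2^m}$ denotes the operator norm of $B$ from $\mathbb{R}^n$ to $\mathbb{R}^m$, both equipped with the Euclidean norm. $\log$ is the natural logarithm. *)

(* Defs.v *)
From HB Require Import structures.
From mathcomp Require Import all_boot all_order all_algebra.
From mathcomp Require Import all_classical all_reals all_analysis.
From mathcomp Require Import Rstruct.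
Set Implicit Arguments. Unset Strict Implicit. Unset Printing Implicit Defensive.
Import Order.TTheory GRing.Theory Num.Theory.
Local Open Scope ring_scope.
Local Open Scope classical_set_scope.

Notation RR := Rdefinitions.R.

Definition norm2 (n : nat) (x : 'cV[RR]_n) : RR :=
  Num.sqrt (\sum_(i < n) (x i 0) ^+ 2).

Definition opnorm (m n : nat) (B : 'M[RR]_(m, n)) : RR :=
  sup [set norm2 (B *m x) | x in [set x : 'cV[RR]_n | norm2 x <= 1]].

Definition intmx (m n : nat) (B : 'M[int]_(m, n)) : 'M[RR]_(m, n) :=
  map_mx (fun z : int => z%:~R) B.

(* Main.v *)
Require Import Defs.
From HB Require Import structures.
From mathcomp Require Import all_boot all_order all_algebra.
From mathcomp Require Import all_classical all_reals all_analysis.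
From mathcomp Require Import Rstruct.
From mathcomp Require Import ring lra zify.
Import Order.TTheory GRing.Theory Num.Theory.
Local Open Scope ring_scope.
Set Implicit Arguments. Unset Strict Implicit. Unset Printing Implicit Defensive.
Lemma expR1_le4 : expR (1 : RR) <= 4.
Proof.
have h := expR_ge1Dx (- (2^-1) : RR).
have e1 : (1 : RR) = 2^-1 + 2^-1 by field.
have hp : 0 < expR (2^-1 : RR) by apply: expR_gt0.
rewrite e1 exp.expRD.
have : expR (2^-1 : RR) <= 2.
  rewrite expRN in h.
  have h2 : (2^-1 : RR) <= (expR (2^-1))^-1 by lra.
  have h4 : expR (2^-1 : RR) * 2^-1 <= expR (2^-1) * (expR (2^-1))^-1.
    by rewrite ler_pM2l.
  rewrite mulfV ?gt_eqF // in h4; lra.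
move=> h3.
have : expR (2^-1 : RR) * expR (2^-1) <= 2 * 2.
  by apply: ler_pM => //; apply: ltW.
lra.
Qed.

Lemma succ_pow_le (k : nat) : (k.+1 ^ k <= 4 * k ^ k)%N.
Proof.
case: k => [//|k].
rewrite -(@ler_nat RR) natrM !natrX.
set a := (k.+1%:R : RR).
have ha : 0 < a by rewrite /a ltr0n.
have -> : (k.+2%:R : RR) = a * (1 + a^-1).
  by rewrite /a mulrDr mulr1 mulfV ?gt_eqF // -natr1 addrC.
rewrite exprMn mulrC ler_pM2r ?exprn_gt0 //.
apply: (le_trans _ expR1_le4).
have ha0 : a != 0 by rewrite gt_eqF.
rewrite -[X in expR X](mulfV ha0) /a expRM_natl.
apply: lerXn2r.
- by rewrite nnegrE addr_ge0 // invr_ge0 ler0n.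
- by rewrite nnegrE expR_ge0.
- exact: expR_ge1Dx.
Qed.

Lemma pow_self_le (k : nat) : (k ^ k <= 4 ^ k * k`!)%N.
Proof.
elim: k => [//|k IH].
rewrite !expnS factS.
have h := succ_pow_le k.
move: h IH; set X := (k.+1 ^ k)%N; set Y := (k ^ k)%N; set Z := (4 ^ k)%N; set W := k`!.
move=> h IH.
have h1 : (k.+1 * X <= k.+1 * (4 * Y))%N by rewrite leq_mul2l h orbT.
have h2 : (k.+1 * (4 * Y) <= k.+1 * (4 * (Z * W)))%N by rewrite !leq_mul2l IH !orbT.
apply: (leq_trans h1); apply: (leq_trans h2).
rewrite leq_eqVlt; apply/orP; left; apply/eqP; ring.
Qed.

Lemma ffact_le_exp (N k : nat) : (N ^_ k <= N ^ k)%N.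
Proof.
rewrite ffact_prod.
apply: (@leq_trans (\prod_(i < k) N)%N).
  by apply: leq_prod => i _; rewrite leq_subr.
by rewrite prod_nat_const card_ord.
Qed.

Lemma bin_pow_le (N k : nat) : ('C(N, k) * k ^ k <= 4 ^ k * N ^ k)%N.
Proof.
apply: (leq_trans (leq_mul (leqnn _) (pow_self_le k))).
rewrite mulnCA leq_mul2l bin_ffact ffact_le_exp orbT //.
Qed.

Lemma superset_card (T : finType) (k : nat) (A : {set T}) :
  (#|A| <= k <= #|T|)%N -> exists W : {set T}, A \subset W /\ #|W| = k.
Proof.
elim: k A => [|k IH] A /andP [hA hk].
  by exists A; split => //; apply/eqP; rewrite -leqn0.
case: (ltnP #|A| k.+1) => h.
  have [W [AW cW]] : exists W : {set T}, A \subset W /\ #|W| = k.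
    by apply: IH; rewrite -ltnS h /= ltnW.
  have : (0 < #|~: W|)%N by have := cardsC W; lia.
  case/card_gt0P => x; rewrite inE => xW.
  exists (x |: W); split.
    by apply: (fintype.subset_trans AW); apply: finset.subsetUr.
  by rewrite cardsU1 xW cW.
exists A; split => //; apply/eqP; rewrite eqn_leq h andbT.
by [].
Qed.

Lemma subset_card (T : finType) (k : nat) (A : {set T}) :
  (k <= #|A|)%N -> exists B : {set T}, B \subset A /\ #|B| = k.
Proof.
move=> hk.
have hA : (#|A| <= #|T|)%N by apply: max_card.
have hC := cardsC A.
have [W [AW cW]] : exists W : {set T}, ~: A \subset W /\ #|W| = (#|T| - k)%N.
  by apply: superset_card; apply/andP; split; lia.
exists (~: W); split.
  by rewrite -finset.setCS finset.setCK.
have := cardsC W; lia.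
Qed.

Lemma wcs (I : finType) (b y : I -> RR) : (forall i, 0 <= b i) ->
  (\sum_i b i * y i) ^+ 2 <= (\sum_i b i) * (\sum_i b i * y i ^+ 2).
Proof.
move=> hb.
have e1 : (\sum_i b i * y i) ^+ 2 = \sum_i \sum_j (b i * y i) * (b j * y j).
  by rewrite expr2 mulr_suml; apply: eq_bigr => i _; rewrite mulr_sumr.
have e2 : (\sum_i b i) * (\sum_i b i * y i ^+ 2) =
          \sum_i \sum_j b i * (b j * y j ^+ 2).
  by rewrite mulr_suml; apply: eq_bigr => i _; rewrite mulr_sumr.
have e3 : (\sum_i b i) * (\sum_i b i * y i ^+ 2) =
          \sum_i \sum_j b j * (b i * y i ^+ 2).
  by rewrite e2 exchange_big.
suff : \sum_i \sum_j (b i * y i) * (b j * y j) + \sum_i \sum_j (b i * y i) * (b j * y j)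
   <= \sum_i \sum_j b i * (b j * y j ^+ 2) + \sum_i \sum_j b j * (b i * y i ^+ 2).
  rewrite -e1 -e2 -e3; lra.
  rewrite -!big_split /=; apply: ler_sum => i _.
  rewrite -!big_split /=; apply: ler_sum => j _.
  have hij : 0 <= b i * b j by rewrite mulr_ge0.
  have : 0 <= b i * b j * (y i - y j) ^+ 2 by rewrite mulr_ge0 // sqr_ge0.
  set u := b i; set v := b j; set p := y i; set q := y j.
  move=> h; apply: (le_trans _ (_ : _ <= _)); last first.
    have -> : u * (v * q ^+ 2) + v * (u * p ^+ 2) = u * v * (p ^+ 2 + q ^+ 2) by ring.
    exact: lexx.
  have -> : u * p * (v * q) + u * p * (v * q) = u * v * (p ^+ 2 + q ^+ 2) - u * v * (p - q) ^+ 2 by ring.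
  by rewrite lerBlDr lerDl.
Qed.

Lemma opnorm_schur (m n : nat) (B : 'M[RR]_(m, n)) (R Cc : RR) :
  (forall i j, 0 <= B i j) -> (forall i, \sum_j B i j <= R) ->
  (forall j, \sum_i B i j <= Cc) -> 0 <= R -> 0 <= Cc ->
  opnorm B <= Num.sqrt (R * Cc).
Proof.
move=> hB hR hC R0 hC0.
rewrite /opnorm; apply: ge_sup.
  exists (norm2 (B *m 0)); exists 0 => //=.
  by rewrite /norm2 big1 ?sqrtr0 // => i _; rewrite mxE expr0n.
move=> _ [x hx <-].
rewrite /norm2 ler_sqrt ?mulr_ge0 //.
have hx1 : \sum_j x j 0 ^+ 2 <= 1.
  move: hx; rewrite /= /norm2 => hx.
  have h0 : 0 <= \sum_j x j 0 ^+ 2 by apply: sumr_ge0 => j _; exact: sqr_ge0.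
  rewrite -(sqr_sqrtr h0) -(expr1n _ 2); rewrite ler_sqr ?nnegrE ?sqrtr_ge0 //.
apply: (@le_trans _ _ (\sum_i (\sum_j B i j) * (\sum_j B i j * x j 0 ^+ 2))).
  apply: ler_sum => i _; rewrite mxE; exact: wcs.
apply: (@le_trans _ _ (\sum_i R * (\sum_j B i j * x j 0 ^+ 2))).
  apply: ler_sum => i _; apply: ler_wpM2r => //.
  by apply: sumr_ge0 => j _; rewrite mulr_ge0 // sqr_ge0.
rewrite -mulr_sumr ler_wpM2l // exchange_big /=.
apply: (@le_trans _ _ (\sum_j Cc * x j 0 ^+ 2)).
  apply: ler_sum => j _; rewrite -mulr_suml ler_wpM2r ?sqr_ge0 //.
rewrite -mulr_sumr.
by rewrite -[X in _ <= X]mulr1 ler_wpM2l.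
Qed.

Definition wt (m n : nat) (F : {ffun 'I_n * 'I_6 -> 'I_m}) (i : 'I_m) (j : 'I_n) : nat :=
  (7 * ((i : nat) == j) + \sum_(l < 6) (F (j, l) == i))%N.

Definition Bint (m n : nat) (F : {ffun 'I_n * 'I_6 -> 'I_m}) : 'M[int]_(m, n) :=
  \matrix_(i, j) (wt F i j)%:Z.

Definition hit (m n : nat) (F : {ffun 'I_n * 'I_6 -> 'I_m}) (i : 'I_m) (j : 'I_n) : bool :=
  ((i : nat) == j) || [exists l, F (j, l) == i].

Lemma intmxE (m n : nat) (F : {ffun 'I_n * 'I_6 -> 'I_m}) i j :
  intmx (Bint F) i j = (wt F i j)%:R.
Proof. by rewrite /intmx !mxE. Qed.

Lemma wt_eq0 (m n : nat) (F : {ffun 'I_n * 'I_6 -> 'I_m}) i j :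
  (wt F i j == 0)%N = ~~ hit F i j.
Proof.
rewrite /wt /hit addn_eq0 muln_eq0 /= sum_nat_eq0 negb_or negb_exists.
by rewrite eqb0; congr (_ && _); apply: eq_forallb => l; rewrite eqb0.
Qed.

Lemma slot_sum (m n : nat) (F : {ffun 'I_n * 'I_6 -> 'I_m}) j :
  (\sum_(i < m) \sum_(l < 6) (F (j, l) == i) = 6)%N.
Proof.
rewrite exchange_big /= -[RHS]card_ord -sum1_card /=.
apply: eq_bigr => l _.
rewrite (bigD1 (F (j, l))) //= eqxx big1 // => i hi.
by rewrite eq_sym (negbTE hi).
Qed.

Lemma kermx0_of (p q : nat) (A : 'M[RR]_(p, q)) :
  (forall v : 'rV[RR]_p, v *m A = 0 -> v = 0) -> \rank A = p.
Proof.
move=> h; apply/eqP; change (row_free A); rewrite -kermx_eq0; apply/eqP.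
apply/row_matrixP => r; rewrite row0; apply: h.
by rewrite -row_mul mulmx_ker row0.
Qed.

Lemma rank_Bint (m n : nat) (F : {ffun 'I_n * 'I_6 -> 'I_m}) :
  (m <= n)%N -> \rank (intmx (Bint F)) = m.
Proof.
move=> hmn; apply: kermx0_of => v hv.
case: m F v hv hmn => [|m] F v hv hmn; first by apply/rowP => -[].
set a := fun i : 'I_m.+1 => `|v 0 i|.
case: (@arg_maxP _ _ _ ord0 predT a isT) => i0 _ hmax.
suff : a i0 = 0.
  move=> h0; apply/rowP => i; rewrite mxE; apply/eqP; rewrite -normr_eq0.
  by rewrite eq_le normr_ge0 andbT -h0; apply: hmax.
pose j0 : 'I_n := widen_ord hmn i0.
have e : \sum_i v 0 i * (wt F i j0)%:R = 0.
  transitivity ((v *m intmx (Bint F)) 0 j0); last by rewrite hv mxE.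
  by rewrite mxE; apply: eq_bigr => i _; rewrite intmxE.
rewrite (bigD1 i0) //= in e.
have hd : (7 <= wt F i0 j0)%N by rewrite /wt /= eqxx muln1 leq_addr.
have ho : (\sum_(i | i != i0) wt F i j0 <= 6)%N.
  rewrite (eq_bigr (fun i => \sum_(l < 6) (F (j0, l) == i))%N); last first.
    move=> i hi; rewrite /wt /=.
    by rewrite (_ : ((i : nat) == i0) = false) //; apply/negbTE.
  apply: (leq_trans _ (eq_leq (slot_sum F j0))).
  rewrite [X in (_ <= X)%N](bigD1 i0) //=.
  exact: leq_addl.
have hv0 : 0 <= a i0 by rewrite /a normr_ge0.
set S := \sum_(i | i != i0) v 0 i * (wt F i j0)%:R in e.
have h1 : a i0 * (wt F i0 j0)%:R = `|S|.
  have -> : S = - (v 0 i0 * (wt F i0 j0)%:R) by apply/eqP; rewrite -addr_eq0 addrC e.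
  by rewrite normrN normrM [`|_%:R|]ger0_norm.
have h2 : `|S| <= a i0 * 6%:R.
  apply: (le_trans (ler_norm_sum _ _ _)).
  apply: (@le_trans _ _ (\sum_(i | i != i0) a i0 * (wt F i j0)%:R)).
    apply: ler_sum => i _; rewrite normrM [`|_%:R|]ger0_norm //.
    by rewrite ler_wpM2r //; exact: (hmax i isT).
  by rewrite -mulr_sumr -natr_sum ler_wpM2l // ler_nat.
have h3 : a i0 * 7%:R <= a i0 * (wt F i0 j0)%:R by rewrite ler_wpM2l // ler_nat.
have : a i0 * 7%:R <= a i0 * 6%:R by apply: (le_trans h3); rewrite h1.
move=> h4; apply/eqP; rewrite eq_le hv0 andbT.
have e7 : (7%:R : RR) = 7 by []. have e6 : (6%:R : RR) = 6 by [].
rewrite e7 e6 in h4; lra.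
Qed.

Lemma indep_Bint (m n : nat) (F : {ffun 'I_n * 'I_6 -> 'I_m}) (s : nat) (f : 'I_s -> 'I_n) :
  injective f ->
  (forall S : {set 'I_n}, (0 < #|S| <= s)%N ->
     exists i, #|[set j in S | hit F i j]| == 1%N) ->
  \rank (colsub f (intmx (Bint F))) = s.
Proof.
move=> finj hUN; rewrite -mxrank_tr; apply: kermx0_of => v hv.
apply/rowP => k0; rewrite mxE; apply/eqP/negPn/negP => hk0.
set K := [set k | v 0 k != 0].
set S := f @: K.
have cS : #|S| = #|K| by rewrite card_imset.
have : (0 < #|S| <= s)%N.
  rewrite cS; apply/andP; split.
    by apply/card_gt0P; exists k0; rewrite inE.
  by rewrite -[X in (_ <= X)%N]card_ord max_card.
case/hUN => i /cards1P [j1 hj1].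
have : j1 \in [set j in S | hit F i j] by rewrite hj1 set11.
rewrite inE => /andP [/imsetP [k1 k1K ej1] hit1]; subst j1.
have e : \sum_k v 0 k * (wt F i (f k))%:R = 0.
  transitivity ((v *m (colsub f (intmx (Bint F)))^T) 0 i); last by rewrite hv mxE.
  by rewrite mxE; apply: eq_bigr => k _; rewrite !mxE.
move: e; rewrite (bigD1 k1) //= big1 ?addr0 => [|k hk].
  apply/eqP; rewrite mulf_eq0 negb_or; rewrite inE in k1K; rewrite k1K /=.
  by rewrite pnatr_eq0 wt_eq0 hit1.
case: (boolP (v 0 k == 0)) => [/eqP -> | hvk]; first by rewrite mul0r.
have : f k \notin [set j in S | hit F i j].
  rewrite hj1 inE; apply/negP => /eqP hkk; move: (finj _ _ hkk) => hkk2; by rewrite hkk2 eqxx in hk.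
move=> hn.
have hS : f k \in S by apply: imset_f; rewrite inE.
have hnh : ~~ hit F i (f k) by apply: contra hn => h; rewrite inE hS h.
have /eqP -> : (wt F i (f k) == 0)%N by rewrite wt_eq0.
by rewrite mulr0.
Qed.

Lemma card_sum_eq (T U : finType) (P : {set T}) (g : T -> U) (u : U) :
  #|[set x in P | g x == u]| = (\sum_(x in P) (g x == u))%N.
Proof.
rewrite -sum1_card [RHS]big_mkcond [LHS]big_mkcond /=.
by apply: eq_bigr => x _; rewrite !inE; case: (x \in P); case: (g x == u).
Qed.

Lemma card_partition_sum (T U : finType) (P : {set T}) (g : T -> U) :
  (\sum_u #|[set x in P | g x == u]| = #|P|)%N.
Proof.
rewrite (eq_bigr (fun u => \sum_(x in P) (g x == u))%N); last by move=> u _; apply: card_sum_eq.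
rewrite exchange_big /= -sum1_card; apply: eq_bigr => x _.
rewrite (bigD1 (g x)) //= eqxx big1 // => u hu.
by rewrite eq_sym (negbTE hu).
Qed.

Lemma noUN_W (m n : nat) (F : {ffun 'I_n * 'I_6 -> 'I_m}) (hmn : (m <= n)%N)
  (S : {set 'I_n}) :
  (forall i, #|[set j in S | hit F i j]| != 1%N) ->
  exists W : {set 'I_m}, (#|W| <= 4 * #|S|)%N /\
    (forall x, x.1 \in S -> F x \in W).
Proof.
move=> hno.
set D := [set i : 'I_m | widen_ord hmn i \in S].
set P := [set x : 'I_n * 'I_6 | x.1 \in S].
set I := [set F x | x in P].
exists (D :|: I); split; last first.
  by move=> x hx; rewrite finset.in_setU; apply/orP; right; apply: imset_f; rewrite inE.
have hD : (#|D| <= #|S|)%N.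
  have winj : injective (widen_ord hmn).
    by move=> a b h; apply: val_inj; exact: (congr1 val h).
  rewrite -(card_imset D winj).
  by apply: subset_leq_card; apply/fintype.subsetP => _ /imsetP [i hi ->]; rewrite inE in hi.
have hP : #|P| = (#|S| * 6)%N.
  have -> : (#|S| * 6 = #|S| * #|[set: 'I_6]|)%N by rewrite cardsT card_ord.
  rewrite -cardsX.
  by apply: eq_card => x; rewrite !inE; case: x => a b /=; rewrite andbT.
have hc : forall i, i \in I :\: D -> (2 <= #|[set x in P | F x == i]|)%N.
  move=> i; rewrite finset.in_setD => /andP [hiD /imsetP [x0 hx0 hFx]].
  have hit0 : hit F i x0.1.
    by rewrite /hit; apply/orP; right; apply/existsP; exists x0.2; by rewrite hFx -surjective_pairing.
  have h1 : (1 < #|[set j in S | hit F i j]|)%N.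
    have : (0 < #|[set j in S | hit F i j]|)%N.
      apply/card_gt0P; exists x0.1; rewrite inE hit0 andbT; by rewrite inE in hx0.
    by move: (hno i); case: #|_| => [|[|k]].
  case/card_gt1P: h1 => j1 [j2 [hj1 hj2 hne]].
  have gethit : forall j, j \in [set j in S | hit F i j] -> exists l, F (j, l) == i.
    move=> j; rewrite inE => /andP [hjS]; rewrite /hit => /orP [hij|]; last by move/existsP.
    exfalso; move: hiD; rewrite inE; apply/negP; rewrite negbK.
    by rewrite (_ : widen_ord hmn i = j) //; apply: val_inj => /=; apply/eqP.
  have [l1 hl1] := gethit j1 hj1.
  have [l2 hl2] := gethit j2 hj2.
  rewrite inE in hj1; rewrite inE in hj2.
  case/andP: hj1 => hj1 _; case/andP: hj2 => hj2 _.
  have hne2 : ((j1, l1) != (j2, l2)) = true.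
    by apply/negP => /eqP [] h; move: hne; rewrite h eqxx.
  have c2 := cards2 (j1, l1) (j2, l2); rewrite hne2 in c2.
  apply: (@leq_trans #|[set (j1, l1); (j2, l2)]|); first by rewrite c2.
  apply: subset_leq_card; apply/fintype.subsetP => x; rewrite !inE => /orP [] /eqP -> /=.
    by rewrite hj1 hl1.
  by rewrite hj2 hl2.
have hID : (2 * #|I :\: D| <= 6 * #|S|)%N.
  apply: (@leq_trans (\sum_(i in I :\: D) #|[set x in P | F x == i]|)%N).
    by rewrite mulnC -sum_nat_const; apply: leq_sum => i hi; apply: hc.
  rewrite mulnC -hP -(card_partition_sum P F).
  rewrite [X in (_ <= X)%N](bigID (fun i => i \in I :\: D)) /=; exact: leq_addr.
have hU : (#|D :|: I| <= #|D| + #|I :\: D|)%N.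
  rewrite cardsU -(cardsID D I) finset.setIC; lia.
move: hD hID hU; move: #|D| #|I :\: D| #|S| #|D :|: I| => a b c d; lia.
Qed.

Lemma card_ffun_cond (aT rT : finType) (P : aT -> {set rT}) :
  #|[set f : {ffun aT -> rT} | [forall x, f x \in P x]]| = (\prod_x #|P x|)%N.
Proof.
transitivity #|family P|.
  by apply: eq_card => f; rewrite inE; apply/forallP/familyP.
rewrite card_family foldrE big_map big_enum /=.
by [].
Qed.

Lemma card_bigcup_leq (I T : finType) (P : pred I) (E : I -> {set T}) :
  (#|\bigcup_(i | P i) E i| <= \sum_(i | P i) #|E i|)%N.
Proof.
apply: (big_ind2 (fun (A : {set T}) (k : nat) => #|A| <= k)%N).
- by rewrite cards0.
- move=> A a B b hA hB; have := leq_card_setU A B; case=> h1 _; apply: (leq_trans h1).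
  exact: leq_add.
- by move=> i _.
Qed.

Lemma geom_sum (k : nat) :
  3 * \sum_(t < k) (4^-1 : RR) ^+ t.+1 = 1 - (4^-1) ^+ k.
Proof.
elim: k => [|k IH]; first by rewrite big_ord0 expr0; lra.
rewrite big_ord_recr /= mulrDr IH !exprS; lra.
Qed.

Lemma final_sum (M a s0 : nat) (b : nat -> nat) : (0 < M)%N -> (4 * a <= M)%N ->
  (forall t, (t < s0)%N -> (4 ^ t.+1 * b t <= M)%N) ->
  (a + \sum_(t < s0) b t < M)%N.
Proof.
move=> hM ha hb.
rewrite -(@ltr_nat RR) natrD natr_sum.
have hM' : (0 : RR) < M%:R by rewrite ltr0n.
have ha' : (a%:R : RR) <= M%:R / 4.
  have : ((4 * a)%:R : RR) <= M%:R by rewrite ler_nat.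
  rewrite natrM; move=> h; lra.
have hb' : \sum_(t < s0) (b t)%:R <= \sum_(t < s0) (M%:R : RR) * (4^-1) ^+ t.+1.
  apply: ler_sum => t _.
  have : ((4 ^ t.+1 * b t)%:R : RR) <= M%:R by rewrite ler_nat; apply: hb.
  rewrite natrM natrX => h.
  have h4 : (0 : RR) < 4%:R ^+ t.+1 by rewrite exprn_gt0 // ltr0n.
  by rewrite exprVn ler_pdivlMr // mulrC.
rewrite -mulr_sumr in hb'.
have g := geom_sum s0.
have hp : 0 <= (4^-1 : RR) ^+ s0 by rewrite exprn_ge0 // invr_ge0.
set G := \sum_(t < s0) (4^-1 : RR) ^+ t.+1 in g hb'.
have hG : G <= 3^-1 by lra.
have : M%:R * G <= M%:R * 3^-1 by rewrite ler_pM2l.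
lra.
Qed.

Lemma exists_good (m n L1 s0 : nat) :
  (0 < m)%N -> (m <= n)%N -> (4 * s0 <= m)%N ->
  (4 * m * 'C(n * 6, L1) <= m ^ L1)%N ->
  (forall t, (t < s0)%N ->
     (4 ^ t.+1 * ('C(n, t.+1) * 'C(m, 4 * t.+1) * (4 * t.+1) ^ (t.+1 * 6))
        <= m ^ (t.+1 * 6))%N) ->
  exists F : {ffun 'I_n * 'I_6 -> 'I_m},
    (forall i, #|[set x | F x == i]| < L1)%N /\
    (forall S : {set 'I_n}, (0 < #|S| <= s0)%N ->
       exists i, #|[set j in S | hit F i j]| == 1%N).
Proof.
move=> hm hmn hs hL ht.
pose E1 (i : 'I_m) (A : {set 'I_n * 'I_6}) :=
  [set F : {ffun 'I_n * 'I_6 -> 'I_m} |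
     [forall x, F x \in (if x \in A then [set i] else finset.setT)]].
pose E2 (S : {set 'I_n}) (W : {set 'I_m}) :=
  [set F : {ffun 'I_n * 'I_6 -> 'I_m} |
     [forall x, F x \in (if x.1 \in S then W else finset.setT)]].
pose U1 := \bigcup_(i : 'I_m) \bigcup_(A : {set 'I_n * 'I_6} | #|A| == L1) E1 i A.
pose U2 := \bigcup_(t < s0) \bigcup_(S : {set 'I_n} | #|S| == t.+1)
             \bigcup_(W : {set 'I_m} | #|W| == (4 * t.+1)%N) E2 S W.
have cX : #|{: 'I_n * 'I_6}| = (n * 6)%N by rewrite card_prod !card_ord.
have cE1 : forall i (A : {set 'I_n * 'I_6}), #|A| = L1 -> #|E1 i A| = (m ^ (n * 6 - L1))%N.
  move=> i A hA; rewrite card_ffun_cond (bigID (mem A)) /=.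
  rewrite big1 => [|x hx]; last by rewrite hx cards1.
  rewrite mul1n (eq_bigr (fun _ => m)) => [|x hx]; last by rewrite (negbTE hx) cardsT card_ord.
  rewrite prod_nat_const; apply: (congr1 (expn m)).
  have := cardC (mem A); rewrite cX hA => <-; rewrite addKn.
  by apply: eq_card => x.
have cE2 : forall (S : {set 'I_n}) (W : {set 'I_m}),
    #|E2 S W| = (#|W| ^ (#|S| * 6) * m ^ (n * 6 - #|S| * 6))%N.
  move=> S W; rewrite card_ffun_cond (bigID (fun x => x.1 \in S)) /=.
  rewrite (eq_bigr (fun _ => #|W|)) => [|x hx]; last by rewrite hx.
  rewrite [X in (_ * X)%N](eq_bigr (fun _ => m)) => [|x hx]; last by rewrite (negbTE hx) cardsT card_ord.
  rewrite !prod_nat_const.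
  have hP : #|[pred x : 'I_n * 'I_6 | x.1 \in S]| = (#|S| * 6)%N.
    have -> : (#|S| * 6 = #|S| * #|[set: 'I_6]|)%N by rewrite cardsT card_ord.
    rewrite -cardsX; apply: eq_card => x; rewrite !inE; case: x => a b /=.
    by rewrite andbT.
  have hQ : #|[pred x : 'I_n * 'I_6 | ~~ (x.1 \in S)]| = (n * 6 - #|S| * 6)%N.
    have := cardC [pred x : 'I_n * 'I_6 | x.1 \in S]; rewrite cX hP => <-.
    by rewrite addKn; apply: eq_card => x.
  congr (_ * _)%N.
    by apply: (congr1 (expn #|W|)); rewrite -hP; apply: eq_card.
  by apply: (congr1 (expn m)); rewrite -hQ; apply: eq_card.
have hU1 : (#|U1| <= m * ('C(n * 6, L1) * m ^ (n * 6 - L1)))%N.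
  apply: (leq_trans (card_bigcup_leq _ _)).
  rewrite -[X in (X * _)%N]card_ord -sum_nat_const; apply: leq_sum => i _.
  apply: (leq_trans (card_bigcup_leq _ _)).
  rewrite (eq_bigr (fun _ => m ^ (n * 6 - L1)))%N => [|A /eqP hA]; last by rewrite cE1.
  rewrite -[X in 'C(X, L1)]cX -card_draws -sum_nat_const.
  by apply: eq_leq; apply: eq_bigl => A; rewrite inE.
have hU2 : (#|U2| <= \sum_(t < s0) ('C(n, t.+1) * ('C(m, 4 * t.+1) *
               ((4 * t.+1) ^ (t.+1 * 6) * m ^ (n * 6 - t.+1 * 6)))))%N.
  apply: (leq_trans (card_bigcup_leq _ _)); apply: leq_sum => t _.
  apply: (leq_trans (card_bigcup_leq _ _)).
  rewrite -[X in 'C(X, _)](card_ord n) -card_draws -sum_nat_const.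
  rewrite [X in (_ <= X)%N](eq_bigl (fun S : {set 'I_n} => #|S| == t.+1)); last by move=> S; rewrite inE.
  apply: leq_sum => S /eqP hS.
  apply: (leq_trans (card_bigcup_leq _ _)).
  rewrite -[X in 'C(X, _)](card_ord m) -card_draws -sum_nat_const.
  rewrite [X in (_ <= X)%N](eq_bigl (fun W : {set 'I_m} => #|W| == (4 * t.+1)%N)); last by move=> W; rewrite inE.
  apply: leq_sum => W /eqP hW.
  by rewrite cE2 hS hW.
have hlt : (#|U1 :|: U2| < #|{: {ffun 'I_n * 'I_6 -> 'I_m}}|)%N.
  rewrite card_ffun card_ord cX.
  have := leq_card_setU U1 U2; case=> hU12 _; apply: (leq_ltn_trans hU12).
  apply: (leq_ltn_trans (leq_add hU1 hU2)).
  apply: (@final_sum _ _ _ (fun t => 'C(n, t.+1) * ('C(m, 4 * t.+1) *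
               ((4 * t.+1) ^ (t.+1 * 6) * m ^ (n * 6 - t.+1 * 6))))%N).
  - by rewrite expn_gt0 hm.
  - case: (leqP L1 (n * 6)) => hL6.
      rewrite -{3}(subnKC hL6) expnD !mulnA.
      by rewrite leq_mul2r hL orbT.
    by rewrite bin_small // !muln0.
  - move=> t hts; case: (leqP t.+1 n) => htn.
      have h6 : (t.+1 * 6 <= n * 6)%N by rewrite leq_mul2r htn orbT.
      rewrite -{2}(subnKC h6) expnD !mulnA leq_mul2r; apply/orP; right.
      by move: (ht t hts); rewrite !mulnA.
    by rewrite bin_small // !mul0n muln0.
have [F hF] : exists F : {ffun 'I_n * 'I_6 -> 'I_m}, F \notin U1 :|: U2.
  have : (0 < #|~: (U1 :|: U2)|)%N by rewrite cardsCs finset.setCK subn_gt0.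
  by case/card_gt0P => F; rewrite inE => hF; exists F.
exists F; split.
  move=> i; rewrite ltnNge; apply/negP => hc.
  have [A [hA cA]] := subset_card hc.
  apply: (negP hF); rewrite finset.in_setU; apply/orP; left.
  apply/bigcupP; exists i => //; apply/bigcupP; exists A; first by rewrite cA.
  rewrite inE; apply/forallP => x; case: ifP => hx; last by rewrite inE.
  by move/fintype.subsetP: hA => /(_ x hx); rewrite !inE.
move=> S /andP [hS0 hSs].
case: (boolP [exists i, #|[set j in S | hit F i j]| == 1%N]) => [/existsP [i hi] | hno].
  by exists i.
exfalso.
have hno' : forall i, #|[set j in S | hit F i j]| != 1%N.
  by move=> i; apply/negP => h; move: hno; rewrite negb_exists => /forallP /(_ i); rewrite h.
have [W0 [cW0 hW0]] := noUN_W hmn hno'.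
have [W [sW cW]] : exists W : {set 'I_m}, W0 \subset W /\ #|W| = (4 * #|S|)%N.
  apply: superset_card; rewrite cW0 card_ord /=.
  by apply: leq_trans hs; rewrite leq_mul2l hSs.
apply: (negP hF); rewrite finset.in_setU; apply/orP; right.
have ht0 : (#|S|.-1 < s0)%N by rewrite prednK.
apply/bigcupP; exists (Ordinal ht0) => //; apply/bigcupP; exists S.
  by rewrite /= prednK.
apply/bigcupP; exists W; first by rewrite /= prednK // cW.
rewrite inE; apply/forallP => x; case: ifP => hx; last by rewrite inE.
apply: (fintype.subsetP sW); exact: hW0.
Qed.

Lemma cond_t (m n u : nat) : (0 < u)%N -> (4 ^ 8 * n * u <= m ^ 2)%N ->
  (4 ^ u * ('C(n, u) * 'C(m, 4 * u) * (4 * u) ^ (u * 6)) <= m ^ (u * 6))%N.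
Proof.
move=> hu hK.
have h1 := bin_pow_le n u.
have h2 := bin_pow_le m (4 * u).
set A := 'C(n, u) in h1 *; set B := 'C(m, 4 * u) in h2 *.
set a := (4 ^ u)%N; set w := (u ^ u)%N; set p := (n ^ u)%N; set r := (m ^ u)%N.
have e1 : ((4 * u) ^ (4 * u) = a ^ 4 * w ^ 4)%N.
  by rewrite (mulnC 4%N u) expnM !expnMn mulnC.
have e2 : (4 ^ (4 * u) = a ^ 4)%N by rewrite (mulnC 4%N u) expnM.
have e3 : (m ^ (4 * u) = r ^ 4)%N by rewrite (mulnC 4%N u) expnM.
have e4 : ((4 * u) ^ (u * 6) = a ^ 6 * w ^ 6)%N by rewrite expnM !expnMn.
have e5 : (m ^ (u * 6) = r ^ 6)%N by rewrite expnM.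
have h3 : (a ^ 8 * p * w <= r ^ 2)%N.
  have : ((4 ^ 8 * n * u) ^ u <= (m ^ 2) ^ u)%N by rewrite leq_exp2r.
  rewrite !expnMn.
  by move=> h; exact: h.
rewrite e1 e2 e3 in h2; rewrite e4 e5.
have wp : (0 < w)%N by rewrite expn_gt0 hu.
have ap : (0 < a)%N by rewrite expn_gt0.
rewrite -(@leq_pmul2r (w * (a ^ 4 * w ^ 4))); last first.
  have pa4 : (0 < a ^ 4)%N by rewrite expn_gt0 ap.
  have pw4 : (0 < w ^ 4)%N by rewrite expn_gt0 wp.
  by rewrite !muln_gt0 wp ap.
have E : (a * (A * B * (a ^ 6 * w ^ 6)) * (w * (a ^ 4 * w ^ 4)) =
          (a ^ 7 * w ^ 6) * (A * w) * (B * (a ^ 4 * w ^ 4)))%N by ring.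
rewrite E.
apply: (@leq_trans ((a ^ 7 * w ^ 6) * (a * p) * (a ^ 4 * r ^ 4))%N).
  by apply: leq_mul; [apply: leq_mul|].
have E2 : ((a ^ 7 * w ^ 6) * (a * p) * (a ^ 4 * r ^ 4) =
           (a ^ 8 * p * w) * (a ^ 4 * w ^ 5 * r ^ 4))%N by ring.
rewrite E2.
apply: (@leq_trans (r ^ 2 * (a ^ 4 * w ^ 5 * r ^ 4))%N).
  by rewrite leq_mul2r h3 orbT.
by apply: eq_leq; ring.
Qed.

Lemma cond_row (m n L1 : nat) : (0 < L1)%N -> (96 * n <= m * L1)%N ->
  (4 * m <= 4 ^ L1)%N -> (4 * m * 'C(n * 6, L1) <= m ^ L1)%N.
Proof.
move=> hL hn h4.
have h := bin_pow_le (n * 6) L1.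
have pL : (0 < L1 ^ L1)%N by rewrite expn_gt0 hL.
rewrite -(@leq_pmul2r (L1 ^ L1)) //.
apply: (@leq_trans (4 * m * (4 ^ L1 * (n * 6) ^ L1))%N).
  by rewrite -mulnA leq_mul2l h orbT.
apply: (@leq_trans (4 ^ L1 * (4 ^ L1 * (n * 6) ^ L1))%N).
  by rewrite leq_mul2r h4 orbT.
have -> : (4 ^ L1 * (4 ^ L1 * (n * 6) ^ L1) = (96 * n) ^ L1)%N.
  by rewrite mulnA -!expnMn; congr (_ ^ _)%N; ring.
by rewrite -expnMn leq_exp2r.
Qed.

Lemma m_lt (m n : nat) : (4 <= m)%N -> (m%:R * ln (m%:R : RR)) / 4 <= n%:R ->
  (m < 4 ^ (4 * (n %/ m).+1))%N.
Proof.
move=> hm hyp.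
set q := (n %/ m).+1.
have hm0 : (0 < m)%N by apply: leq_trans hm.
have hnq : (n < q * m)%N by apply: ltn_ceil.
have mR : (0 : RR) < m%:R by rewrite ltr0n.
have hnq' : (n%:R : RR) < q%:R * m%:R by rewrite -natrM ltr_nat.
have hln : ln (m%:R : RR) < 4 * q%:R.
  have : m%:R * ln (m%:R : RR) < m%:R * (4 * q%:R) by
    rewrite mulrCA; lra.
  by rewrite ltr_pM2l.
have h1 : (m%:R : RR) < expR (4 * q%:R).
  by rewrite -[X in X < _](lnK (_ : m%:R \in Num.pos)) ?ltr_expR // posrE.
have h2 : expR (4 * q%:R : RR) <= 4 ^+ (4 * q)%N.
  have -> : (4 * q%:R : RR) = (4 * q)%N%:R * 1 by rewrite mulr1 natrM.
  rewrite expRM_natl; apply: lerXn2r.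
  - by rewrite nnegrE expR_ge0.
  - by rewrite nnegrE; lra.
  - exact: expR1_le4.
rewrite -(@ltr_nat RR) natrX.
exact: (lt_le_trans h1 h2).
Qed.

Lemma sum_eqk (p k : nat) : (\sum_(i < p) ((i : nat) == k) = (k < p))%N.
Proof.
elim: p => [|p IH]; first by rewrite big_ord0.
rewrite big_ord_recr /= IH.
case: (ltngtP k p) => [h|h|<-].
- by rewrite ltnS ltnW.
- by rewrite ltnS leqNgt h.
- by rewrite ltnSn.
Qed.

Lemma row_sum_wt (m n : nat) (F : {ffun 'I_n * 'I_6 -> 'I_m}) i :
  (\sum_j wt F i j <= 7 + #|[set x | F x == i]|)%N.
Proof.
rewrite /wt big_split /= -big_distrr /=.
apply: leq_add.
  have h1 : (\sum_(j < n) ((i : nat) == j) <= 1)%N.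
    rewrite (eq_bigr (fun j : 'I_n => nat_of_bool ((j : nat) == i))); last by move=> j _; rewrite eq_sym.
    by rewrite sum_eqk leq_b1.
  by rewrite -[X in (_ <= X)%N]muln1 leq_mul2l h1 orbT.
rewrite pair_bigA /= -sum1_card [X in (_ <= X)%N]big_mkcond /=.
apply: eq_leq; apply: eq_bigr => x _; rewrite inE -surjective_pairing.
by case: (F x == i).
Qed.

Lemma col_sum_wt (m n : nat) (F : {ffun 'I_n * 'I_6 -> 'I_m}) j :
  (\sum_i wt F i j <= 13)%N.
Proof.
rewrite /wt big_split /= -big_distrr /= slot_sum.
have h : (\sum_(i < m) ((i : nat) == j) <= 1)%N by rewrite sum_eqk leq_b1.
have h7 : (7 * \sum_(i < m) ((i : nat) == j) <= 7)%N by rewrite -[X in (_ <= X)%N]muln1 leq_mul2l h orbT.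
exact: (leq_add h7 (leqnn 6)).
Qed.

Lemma UN_single (m n : nat) (F : {ffun 'I_n * 'I_6 -> 'I_m}) (S : {set 'I_n}) :
  #|S| = 1%N -> exists i, #|[set j in S | hit F i j]| == 1%N.
Proof.
move/eqP/cards1P => [j ->].
exists (F (j, ord0)); apply/cards1P; exists j; apply/setP => x; rewrite !inE.
case: (boolP (x == j)) => //= /eqP ->.
by rewrite /hit; apply/orP; right; apply/existsP; exists ord0.
Qed.

Theorem lemma2p7 :
  exists c C : RR, 0 < c /\ 0 < C /\
    forall m n : nat, (4 <= m)%N -> (m <= n)%N ->
      (m%:R * ln (m%:R : RR)) / 4 <= (n%:R : RR) ->
      exists (s : nat) (B : 'M[int]_(m, n)),
        c * (m%:R : RR) ^+ 2 / n%:R <= s%:R /\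
        (s <= n)%N /\
        \rank (intmx B) = m /\
        (forall f : 'I_s -> 'I_n, injective f -> \rank (colsub f (intmx B)) = s) /\
        opnorm (intmx B) <= C * Num.sqrt ((n%:R : RR) / m%:R).
Proof.
exists ((2 * 4 ^ 8)%N%:R^-1), 52.
split; first by rewrite invr_gt0 ltr0n.
split; first by lra.
move=> m n hm hmn hyp.
set q := (n %/ m).+1.
set L1 := (96 * q)%N.
set K := (4 ^ 8)%N.
set s0 := (m ^ 2 %/ (K * n))%N.
set s := maxn 1 s0.
have hm0 : (0 < m)%N by apply: leq_trans hm.
have hn0 : (0 < n)%N by apply: leq_trans hmn.
have hK0 : (0 < K * n)%N by rewrite muln_gt0 hn0 expn_gt0.
have hs0 : (s0 * (K * n) <= m ^ 2)%N by apply: leq_trunc_div.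
have h4s : (4 * s0 <= m)%N.
  have h1 : (s0 * K * m <= m * m)%N.
    apply: (leq_trans _ (_ : s0 * (K * n) <= m * m)%N).
      by rewrite -mulnA leq_mul2l leq_mul2l hmn !orbT.
    by rewrite mulnn.
  rewrite leq_pmul2r // in h1.
  apply: leq_trans h1; rewrite mulnC leq_mul2l; apply/orP; right.
  exact: (@leq_pexp2l 4 1 8 isT isT).
have hqm : (n < q * m)%N by apply: ltn_ceil.
have hmq := m_lt hm hyp.
have hrow : (4 * m * 'C(n * 6, L1) <= m ^ L1)%N.
  apply: cond_row.
  - by rewrite /L1 muln_gt0.
  - by rewrite /L1 mulnCA leq_mul2l ltnW // mulnC.
  - apply: (@leq_trans (4 ^ (4 * q).+1)%N).
      by rewrite expnS leq_mul2l ltnW.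
    by rewrite leq_pexp2l // /L1; lia.
have hcond : forall t, (t < s0)%N ->
     (4 ^ t.+1 * ('C(n, t.+1) * 'C(m, 4 * t.+1) * (4 * t.+1) ^ (t.+1 * 6))
        <= m ^ (t.+1 * 6))%N.
  move=> t ht; apply: cond_t => //.
  apply: (leq_trans _ hs0).
  by rewrite -/K mulnC leq_mul2r ht orbT.
have [F [hF1 hF2]] := exists_good hm0 hmn h4s hrow hcond.
exists s, (Bint F).
split.
  have hc1 : (m ^ 2 < s0.+1 * (K * n))%N by apply: ltn_ceil.
  have hc2 : (s0.+1 <= 2 * s)%N by rewrite /s /maxn; case: ifP => h; lia.
  have hnat : (m ^ 2 <= s * n * (2 * K))%N.
    apply: ltnW; apply: (leq_trans hc1).
    apply: (@leq_trans (2 * s * (K * n))%N); first by rewrite leq_mul2r hc2 orbT.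
    by rewrite [X in (_ <= X)%N]mulnC mulnA [X in (_ <= X)%N]mulnC; apply: eq_leq; ring.
  have hR : (m%:R : RR) ^+ 2 <= s%:R * n%:R * (2 * K)%N%:R.
    by rewrite -natrX -!natrM ler_nat.
  have n0 : (0 : RR) < n%:R by rewrite ltr0n.
  have k0 : (0 : RR) < (2 * K)%N%:R by rewrite ltr0n muln_gt0 expn_gt0.
  rewrite ler_pdivrMr // mulrC ler_pdivrMr //.
split.
  by rewrite geq_max hn0 /=; apply: (leq_trans _ hmn); apply: (leq_trans _ h4s); rewrite leq_pmull.
split; first exact: rank_Bint.
split.
  move=> f finj; apply: indep_Bint => // S /andP [hS0 hSs].
  case: (boolP (#|S| == 1%N)) => [/eqP h1 | h1]; first exact: UN_single.
  apply: hF2; rewrite hS0 /=.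
  have h2 : (1 < #|S|)%N by rewrite ltn_neqAle eq_sym h1 hS0.
  move: hSs; rewrite /s /maxn; case: ifP => // _ h.
  by move: (leq_trans h2 h).
have hop : opnorm (intmx (Bint F)) <= Num.sqrt ((L1 + 6)%N%:R * 13%:R).
  apply: opnorm_schur.
  - by move=> i j; rewrite intmxE ler0n.
  - move=> i; rewrite (eq_bigr (fun j => (wt F i j)%:R)); last by move=> j _; rewrite intmxE.
    rewrite -natr_sum ler_nat; apply: (leq_trans (row_sum_wt F i)).
    by have := hF1 i; lia.
  - move=> j; rewrite (eq_bigr (fun i => (wt F i j)%:R)); last by move=> i _; rewrite intmxE.
    by rewrite -natr_sum ler_nat col_sum_wt.
  - by rewrite ler0n.
  - by rewrite ler0n.
apply: (le_trans hop).
have hqm2 : (q * m <= 2 * n)%N.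
  rewrite /q mulSn; have := leq_trunc_div n m; lia.
have key : ((L1 + 6) * 13 * m <= 2704 * n)%N.
  have e : ((L1 + 6) * 13 * m = 1248 * (q * m) + 78 * m)%N by rewrite /L1; ring.
  rewrite e; lia.
have mR : (0 : RR) < m%:R by rewrite ltr0n.
have keyR : ((L1 + 6)%N%:R * 13%:R : RR) <= 52 ^+ 2 * (n%:R / m%:R).
  rewrite mulrA ler_pdivlMr // -!natrM.
  have -> : (52 ^+ 2 : RR) = 2704%:R by rewrite -natrX.
  by rewrite -natrM ler_nat.
have -> : 52 * Num.sqrt (n%:R / m%:R) = Num.sqrt (52 ^+ 2 * (n%:R / m%:R) : RR).
  by rewrite [in RHS]sqrtrM ?sqr_ge0 // sqrtr_sqr ger0_norm.
by apply: ler_wsqrtr.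
Qed.
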